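(* Let $\xi=\xi_{\{\mu\}}$ be a non-trivial GCKV on $\mathbb{E}^2$ with parameters $\mu=(\mu_0,\mu_1,\mu_2)$ and set $\mu_0':=\frac14(2\mu_0\mu_2-\mu_1^2)$. Let $\mathbb{A}_0\in SL(2,\mathbb{C})$ be any element of the form $\mathbb{A}_0=\begin{pmatrix}\frac12(\delta\mu_2-\gamma\mu_1)&\frac12\delta\mu_1-\gamma\mu_0\\ \gamma&\delta\end{pmatrix}$ with $\frac12\delta^2\mu_2-\gamma\delta\mu_1+\gamma^2\mu_0=1$. Then the set of all $\mathbb{A}\in SL(2,\mathbb{C})$ such that $\chi^{\mathbb{A}}_\star(\xi)$ is in canonical form is $\mathbb{A}_{\mu_0'}\cdot\mathbb{A}_0=\{\mathbb{B}\mathbb{A}_0:\mathbb{B}\in\mathbb{A}_{\mu_0'}\}$, where $\mathbb{A}_{c}:=\left\{\begin{pmatrix}\delta'&-\gamma' c\\ \gamma'&\delta'\end{pmatrix}:\delta'^2+c\gamma'^2=1\right\}$.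
   Context: $\mathbb{E}^2$ is the Euclidean plane with Cartesian coordinates $\{x,y\}$ and $z=\frac12(x-iy)$. A GCKV with parameters $\mu\in\mathbb{C}^3$ is $\xi_{\{\mu\}}=(\mu_0+\mu_1z+\frac12\mu_2z^2)\partial_z+(\bar\mu_0+\bar\mu_1\bar z+\frac12\bar\mu_2\bar z^2)\partial_{\bar z}$; it is in canonical form when $\mu_1=0,\mu_2=2$. For $\mathbb{A}=\begin{pmatrix}\alpha&\beta\\ \gamma&\delta\end{pmatrix}\in SL(2,\mathbb{C})$, $\chi^{\mathbb{A}}$ is the Möbius transformation $z\mapsto(\alpha z+\beta)/(\gamma z+\delta)$ of the Riemann sphere and $\chi^{\mathbb{A}}_\star$ denotes push-forward (which maps GCKVs to GCKVs). *)

(* Defs.v *)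
From HB Require Import structures.
From mathcomp Require Import all_boot all_order all_algebra.
From mathcomp Require Import complex.
From mathcomp Require Import reals.
Set Implicit Arguments. Unset Strict Implicit. Unset Printing Implicit Defensive.
Import Order.TTheory GRing.Theory Num.Theory.
Local Open Scope ring_scope.

Section Defs.
Variable R : realType.
Local Notation C := (R[i]).

(* The d/dz coefficient of the GCKV xi_{mu}: mu0 + mu1 z + 1/2 mu2 z^2.
   (The d/dzbar coefficient is its complex conjugate, hence determined.) *)
Definition gckv_coef (mu0 mu1 mu2 z : C) : C :=
  mu0 + mu1 * z + 2^-1 * mu2 * z ^+ 2.

Definition mx2 (a b c d : C) : 'M[C]_2 :=
  \matrix_(i < 2, j < 2)
    if i == 0 :> nat then (if j == 0 :> nat then a else b)
    else (if j == 0 :> nat then c else d).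

Definition mobius (A : 'M[C]_2) (z : C) : C :=
  (A 0 0 * z + A 0 1) / (A 1 0 * z + A 1 1).

Definition mobius_deriv (A : 'M[C]_2) (z : C) : C :=
  (A 0 0 * A 1 1 - A 0 1 * A 1 0) / (A 1 0 * z + A 1 1) ^+ 2.

(* chi^A_*(xi_{mu}) = xi_{nu}: the push-forward of a (holomorphic-part)
   vector field f(z) d_z under the holomorphic map chi is the field g(w) d_w
   with g(chi z) = chi'(z) f(z); we require this at every point z where
   chi^A is finite (the remaining point is determined by continuity). *)
Definition pushforward_is (A : 'M[C]_2) (mu0 mu1 mu2 nu0 nu1 nu2 : C) : Prop :=
  forall z : C, A 1 0 * z + A 1 1 != 0 ->
    gckv_coef nu0 nu1 nu2 (mobius A z) = mobius_deriv A z * gckv_coef mu0 mu1 mu2 z.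

Definition push_canonical (A : 'M[C]_2) (mu0 mu1 mu2 : C) : Prop :=
  exists nu0 : C, pushforward_is A mu0 mu1 mu2 nu0 0 2.

Definition A_set (c : C) (B : 'M[C]_2) : Prop :=
  exists g' d' : C, d' ^+ 2 + c * g' ^+ 2 = 1 /\ B = mx2 d' (- (g' * c)) g' d'.

End Defs.

(* Main.v *)
Require Import Defs.
From HB Require Import structures.
From mathcomp Require Import all_boot all_order all_algebra.
From mathcomp Require Import complex.
From mathcomp Require Import reals.
From mathcomp Require Import ring.
Import Order.TTheory GRing.Theory Num.Theory.
Local Open Scope ring_scope.

Section H.
Variable R : realType.
Local Notation C := (R[i]).

Lemma ord2_cases (i : 'I_2) : i = 0 \/ i = 1.
Proof. case: i => -[|[|//]] Hi; [left|right]; exact: val_inj. Qed.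

Lemma mx2_eta (A : 'M[C]_2) : A = mx2 (A 0 0) (A 0 1) (A 1 0) (A 1 1).
Proof.
apply/matrixP => i j; rewrite !mxE.
by case: (ord2_cases i) => ->; case: (ord2_cases j) => ->.
Qed.

Lemma mx2E (a b c d : C) :
  [/\ mx2 a b c d 0 0 = a, mx2 a b c d 0 1 = b, mx2 a b c d 1 0 = c & mx2 a b c d 1 1 = d].
Proof. by rewrite !mxE. Qed.

Lemma mx2_mul (a b c d a' b' c' d' : C) :
  mx2 a b c d *m mx2 a' b' c' d' =
  mx2 (a * a' + b * c') (a * b' + b * d') (c * a' + d * c') (c * b' + d * d').
Proof.
apply/matrixP => i j; rewrite !mxE !big_ord_recr big_ord0 /= !mxE add0r.
by case: (ord2_cases i) => ->; case: (ord2_cases j) => ->.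
Qed.

Lemma mx2_det (a b c d : C) : \det (mx2 a b c d) = a * d - b * c.
Proof.
rewrite (expand_det_row _ 0) !big_ord_recr !big_ord0 /= /cofactor !det_mx11 !mxE /=.
rewrite !expr0 !expr1 /=. ring.
Qed.
Lemma quad0 (al be ka z1 z2 z3 : C) :
  z1 != z2 -> z1 != z3 -> z2 != z3 ->
  al * z1 ^+ 2 + be * z1 + ka = 0 ->
  al * z2 ^+ 2 + be * z2 + ka = 0 ->
  al * z3 ^+ 2 + be * z3 + ka = 0 ->
  [/\ al = 0, be = 0 & ka = 0].
Proof.
move=> n12 n13 n23 e1 e2 e3.
have h12 : al * (z1 + z2) + be = 0.
  have : (z1 - z2) * (al * (z1 + z2) + be) = 0.
    rewrite -[RHS](subrr 0) -{1}e1 -e2; ring.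
  by move/eqP; rewrite mulf_eq0 subr_eq0 (negPf n12) => /eqP.
have h13 : al * (z1 + z3) + be = 0.
  have : (z1 - z3) * (al * (z1 + z3) + be) = 0.
    rewrite -[RHS](subrr 0) -{1}e1 -e3; ring.
  by move/eqP; rewrite mulf_eq0 subr_eq0 (negPf n13) => /eqP.
have ha : al = 0.
  have : (z2 - z3) * al = 0.
    rewrite -[RHS](subrr 0) -{1}h12 -h13; ring.
  by move/eqP; rewrite mulf_eq0 subr_eq0 (negPf n23) => /eqP.
move: h12; rewrite ha mul0r add0r => hb.
by move: e1; rewrite ha hb !mul0r !add0r.
Qed.
Lemma natC_neq (m n : nat) : m != n -> (m%:R : C) != n%:R.
Proof. by rewrite eqr_nat. Qed.

Lemma three_pts (c d : C) : ~ (c = 0 /\ d = 0) -> exists z1 z2 z3 : C,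
  [/\ z1 != z2, z1 != z3, z2 != z3 & [/\ c * z1 + d != 0, c * z2 + d != 0 & c * z3 + d != 0]].
Proof.
move=> ncd.
have n2 : (2%:R : C) != 0 by rewrite pnatr_eq0.
have n3 : (3%:R : C) != 0 by rewrite pnatr_eq0.
have n1 : (1 : C) != 0 by exact: oner_neq0.
have [d0|dn0] := eqVneq d 0.
  have cn0 : c != 0 by apply/eqP => c0; apply: ncd.
  exists 1, 2%:R, 3%:R; rewrite d0 !addr0; split.
  - exact: (natC_neq 1 2).
  - exact: (natC_neq 1 3).
  - exact: (natC_neq 2 3).
  - by split; rewrite mulf_neq0.
have [cd0|cdn0] := eqVneq (c + d) 0.
  have hd : d = - c by apply/eqP; rewrite -addr_eq0 addrC cd0.
  have cn0 : c != 0 by apply: contraNneq dn0 => c0; rewrite hd c0 oppr0.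
  exists 0, 2%:R, 3%:R; split.
  - by rewrite eq_sym.
  - by rewrite eq_sym.
  - exact: (natC_neq 2 3).
  - split; first by rewrite mulr0 add0r.
    + have -> : c * 2%:R + d = c by rewrite hd; ring.
      by [].
    + have -> : c * 3%:R + d = c * 2%:R by rewrite hd; ring.
      by rewrite mulf_neq0.
have [cd2|cdn2] := eqVneq (c * 2%:R + d) 0.
  have hd : d = - (c * 2%:R) by apply/eqP; rewrite -addr_eq0 addrC cd2.
  have cn0 : c != 0 by apply: contraNneq dn0 => c0; rewrite hd c0 mul0r oppr0.
  exists 0, 1, 3%:R; split.
  - by rewrite eq_sym.
  - by rewrite eq_sym.
  - exact: (natC_neq 1 3).
  - split; first by rewrite mulr0 add0r.
    + by rewrite mulr1.
    + have -> : c * 3%:R + d = c by rewrite hd; ring.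
      by [].
exists 0, 1, 2%:R; split.
- by rewrite eq_sym.
- by rewrite eq_sym.
- exact: (natC_neq 1 2).
- by split; rewrite ?mulr0 ?add0r ?mulr1.
Qed.
End H.
Arguments mx2_eta {R} A.
Arguments mx2E {R}.
Arguments mx2_mul {R}.
Arguments mx2_det {R}.
Arguments three_pts {R c d}.
Arguments quad0 {R al be ka z1 z2 z3}.

Lemma push_back (R : realType) (a b c d nu z fz : R[i]) : a*d - b*c = 1 ->
  (a*z+b)^+2 + nu*(c*z+d)^+2 = fz -> c*z+d != 0 ->
  nu + 0*((a*z+b)/(c*z+d)) + 2^-1*2*((a*z+b)/(c*z+d))^+2 = (a*d-b*c)/(c*z+d)^+2 * fz.
Proof.
move=> hD <- hz; rewrite hD.
have n2 : (2 : R[i]) != 0 by rewrite pnatr_eq0.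
field; by rewrite ?n2 ?hz.
Qed.

Theorem corollary7p4 (R : realType) (mu0 mu1 mu2 gamma delta : R[i]) :
  (mu0, mu1, mu2) != (0, 0, 0) ->
  2^-1 * delta ^+ 2 * mu2 - gamma * delta * mu1 + gamma ^+ 2 * mu0 = 1 ->
  let mu0' := 4^-1 * (2 * mu0 * mu2 - mu1 ^+ 2) in
  let A0 := mx2 (2^-1 * (delta * mu2 - gamma * mu1))
                (2^-1 * delta * mu1 - gamma * mu0) gamma delta in
  forall A : 'M[R[i]]_2,
    (\det A = 1 /\ push_canonical A mu0 mu1 mu2) <->
    (exists B : 'M[R[i]]_2, A_set mu0' B /\ A = B *m A0).
Proof.
move=> _ hK; cbv zeta => A.
have n2 : (2 : R[i]) != 0 by rewrite pnatr_eq0.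
have n4 : (4 : R[i]) != 0 by rewrite pnatr_eq0.
rewrite (mx2_eta A); move: (A 0 0) (A 0 1) (A 1 0) (A 1 1) => a b c d.
rewrite /push_canonical /pushforward_is /mobius /mobius_deriv /A_set.
case: (mx2E a b c d) => -> -> -> ->.
split.
- case; rewrite mx2_det => hdet [nu0 hpush].
  have hP : forall z, c*z+d != 0 ->
     (2^-1*mu2 - a^+2 - nu0*c^+2) * z^+2 + (mu1 - 2*a*b - 2*nu0*c*d)*z
       + (mu0 - b^+2 - nu0*d^+2) = 0.
    move=> z hz; have := hpush z hz; rewrite /gckv_coef hdet => H.
    have H' : mu0 + mu1*z + 2^-1*mu2*z^+2 = (a*z+b)^+2 + nu0*(c*z+d)^+2.
      transitivity ((c*z+d)^+2 * (1/(c*z+d)^+2 * (mu0 + mu1*z + 2^-1*mu2*z^+2))).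
        by field; rewrite ?hz.
      rewrite -H; field; by rewrite ?hz ?n2.
    transitivity ((mu0 + mu1*z + 2^-1*mu2*z^+2) - ((a*z+b)^+2 + nu0*(c*z+d)^+2)).
      ring.
    by rewrite H' subrr.
  have ncd : ~ (c = 0 /\ d = 0).
    case=> c0 d0; move: hdet; rewrite c0 d0 !mulr0 subrr => /eqP.
    by rewrite eq_sym oner_eq0.
  have [z1 [z2 [z3 [n12 n13 n23 [h1 h2 h3]]]]] := three_pts ncd.
  have [ha hb hk] := quad0 n12 n13 n23 (hP _ h1) (hP _ h2) (hP _ h3).
  have e2 : mu2 = 2 * (a^+2 + nu0*c^+2).
    transitivity (2 * (2^-1*mu2 - a^+2 - nu0*c^+2) + 2 * (a^+2 + nu0*c^+2)).
      by field.
    by rewrite ha mulr0 add0r.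
  have e1 : mu1 = 2*a*b + 2*nu0*c*d.
    transitivity ((mu1 - 2*a*b - 2*nu0*c*d) + (2*a*b + 2*nu0*c*d)); first ring.
    by rewrite hb add0r.
  have e0 : mu0 = b^+2 + nu0*d^+2.
    transitivity ((mu0 - b^+2 - nu0*d^+2) + (b^+2 + nu0*d^+2)); first ring.
    by rewrite hk add0r.
  subst mu0 mu1 mu2.
  have hmu : 4^-1 * (2 * (b^+2 + nu0*d^+2) * (2 * (a^+2 + nu0*c^+2))
                     - (2*a*b + 2*nu0*c*d) ^+ 2) = nu0.
    transitivity (nu0 * (a*d-b*c)^+2); first by field.
    by rewrite hdet expr1n mulr1.
  rewrite hmu.
  set u := a*delta - b*gamma; set v := c*delta - d*gamma.
  have hQ : u^+2 + nu0*v^+2 = 1.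
    by rewrite -hK /u /v; field.
  have hQ0 : u^+2 + nu0*v^+2 - 1 = 0 by rewrite hQ subrr.
  have hD0 : a*d - b*c - 1 = 0 by rewrite hdet subrr.
  exists (mx2 u (-(v*nu0)) v u); split.
    by exists v, u.
  rewrite mx2_mul; congr mx2.
  + apply/eqP; rewrite eq_sym -subr_eq0; apply/eqP.
    transitivity (a*(u^+2 + nu0*v^+2 - 1) + nu0*v*gamma*(a*d - b*c - 1)).
      by rewrite /u /v; field.
    by rewrite hQ0 hD0 !mulr0 addr0.
  + apply/eqP; rewrite eq_sym -subr_eq0; apply/eqP.
    transitivity (b*(u^+2 + nu0*v^+2 - 1) + nu0*v*delta*(a*d - b*c - 1)).
      by rewrite /u /v; field.
    by rewrite hQ0 hD0 !mulr0 addr0.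
  + apply/eqP; rewrite eq_sym -subr_eq0; apply/eqP.
    transitivity (c*(u^+2 + nu0*v^+2 - 1) - u*gamma*(a*d - b*c - 1)).
      by rewrite /u /v; field.
    by rewrite hQ0 hD0 !mulr0 subr0.
  + apply/eqP; rewrite eq_sym -subr_eq0; apply/eqP.
    transitivity (d*(u^+2 + nu0*v^+2 - 1) - u*delta*(a*d - b*c - 1)).
      by rewrite /u /v; field.
    by rewrite hQ0 hD0 !mulr0 subr0.
- case=> B [[g [d' [hq ->]]]]; rewrite mx2_mul => hA.
  have := mx2E a b c d; rewrite hA !mxE /= => -[ea eb ec ed].
  subst a b c d; rewrite mx2_det.
  set m0 := 4^-1 * (2 * mu0 * mu2 - mu1 ^+ 2).
  have hdet : (d' * (2^-1 * (delta * mu2 - gamma * mu1)) + - (g * m0) * gamma) *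
      (g * (2^-1 * delta * mu1 - gamma * mu0) + d' * delta) -
      (d' * (2^-1 * delta * mu1 - gamma * mu0) + - (g * m0) * delta) *
      (g * (2^-1 * (delta * mu2 - gamma * mu1)) + d' * gamma) = 1.
    transitivity ((d'^+2 + m0 * g^+2) *
      (2^-1 * delta ^+ 2 * mu2 - gamma * delta * mu1 + gamma ^+ 2 * mu0)).
      by rewrite /m0; field.
    by rewrite hq hK mulr1.
  split; first exact: hdet.
  exists m0 => z hz; rewrite /gckv_coef.
  apply: push_back => //.
  transitivity ((d'^+2 + m0 * g^+2) *
      ((2^-1 * delta ^+ 2 * mu2 - gamma * delta * mu1 + gamma ^+ 2 * mu0)
        * (mu0 + mu1 * z + 2^-1 * mu2 * z ^+ 2))).
    by rewrite /m0; field.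
  by rewrite hq hK !mul1r.
Qed.
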